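(* Let $n \geq 1$ be an integer and consider Nim on the hypercube $Q_n$ in which every edge has weight $1$, with the playing piece $\Delta$ starting at a vertex. Then the second player $P_2$ has a winning strategy if and only if $n$ is even.
   Context: Nim on a graph: two players agree on a finite simple undirected graph $G$ whose edges carry positive integer weights, and a starting vertex on which a playing piece $\Delta$ is placed. Players $P_1$ (who moves first) and $P_2$ alternate. On a turn, the player chooses an edge of positive weight incident with the vertex currently holding $\Delta$, lowers that edge's weight by a positive integer amount, and moves $\Delta$ to the other endpoint of that edge. Edges of weight $0$ are no longer playable. A player who cannot move loses. The hypercube $Q_n$ has as vertices the binary $n$-tuples, two being adjacent iff they differ in exactly one coordinate. *)

(* Defs.v *)
From mathcomp Require Import all_boot.
Set Implicit Arguments. Unset Strict Implicit. Unset Printing Implicit Defensive.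

(* Edge weights are a function w : T -> T -> nat, read only on
   edges (w x y = w y x is the weight of edge {x,y}). *)
Definition simple_graph (T : finType) (adj : rel T) : Prop :=
  irreflexive adj /\ symmetric adj.

Definition upd_weight (T : finType) (w : T -> T -> nat) (a b : T) (k : nat)
  : T -> T -> nat :=
  fun x y => if ((x == a) && (y == b)) || ((x == b) && (y == a)) then k else w x y.

(* The game is finite (total weight strictly decreases), so these inductive
   notions are exactly the existence of winning strategies. *)
Inductive nim_win (T : finType) (adj : rel T) : T -> (T -> T -> nat) -> Prop :=
| NimWin v w u k :
    adj v u -> 0 < w v u -> k < w v u ->
    nim_lose adj u (upd_weight w v u k) -> nim_win adj v w
with nim_lose (T : finType) (adj : rel T) : T -> (T -> T -> nat) -> Prop :=
| NimLose v w :
    (forall u k, adj v u -> 0 < w v u -> k < w v u ->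
       nim_win adj u (upd_weight w v u k)) -> nim_lose adj v w.

Definition hypercube_vertex (n : nat) := {ffun 'I_n -> bool}.
Definition hypercube_adj (n : nat) : rel (hypercube_vertex n) :=
  fun x y => #|[set i | x i != y i]| == 1.

Definition unit_weights (T : finType) (adj : rel T) : T -> T -> nat :=
  fun x y => if adj x y then 1 else 0.

(* Main.v *)
Require Import Defs.
From mathcomp Require Import all_boot.

Set Implicit Arguments. Unset Strict Implicit. Unset Printing Implicit Defensive.

Definition cnt (T : finType) (w : T -> T -> nat) (x : T) (P : pred T) :=
  #|[set y | P y && (0 < w x y)]|.
Definition Wf (T : finType) (adj : rel T) (w : T -> T -> nat) :=
  [/\ (forall x y, w x y = w y x), (forall x y, w x y <= 1)
    & (forall x y, 0 < w x y -> adj x y)].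
Definition npos (T : finType) (w : T -> T -> nat) :=
  #|[set p : T * T | 0 < w p.1 p.2]|.

Lemma Wf_upd (T : finType) (adj : rel T) w (a b : T) :
  Wf adj w -> Wf adj (upd_weight w a b 0).
Proof.
case=> hs hl ha; split.
- move=> x y; rewrite /upd_weight (hs x y).
  by case: (x == a); case: (y == b); case: (x == b); case: (y == a).
- by move=> x y; rewrite /upd_weight; case: ifP.
- by move=> x y; rewrite /upd_weight; case: ifP => // _; apply: ha.
Qed.

Lemma npos_upd (T : finType) w (a b : T) :
  0 < w a b -> npos (upd_weight w a b 0) < npos w.
Proof.
move=> hab; apply: proper_card; apply/properP; split.
  apply/subsetP => p; rewrite !inE /upd_weight; by case: ifP.
exists (a, b); rewrite !inE //= /upd_weight !eqxx //.
Qed.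

Lemma cnt_upd_a (T : finType) w (a b : T) (P : pred T) :
  a != b -> 0 < w a b -> cnt w a P = cnt (upd_weight w a b 0) a P + P b.
Proof.
move=> hne hab; rewrite /cnt (cardsD1 b) addnC.
have -> : b \in [set y | P y && (0 < w a y)] = P b by rewrite inE hab andbT.
congr (_ + _); apply: eq_card => y; rewrite !inE /upd_weight eqxx (negbTE hne) /=.
by case: (y == b); rewrite ?andbF /=.
Qed.

Lemma cnt_upd_b (T : finType) w (a b : T) (P : pred T) :
  (forall x y, w x y = w y x) ->
  a != b -> 0 < w a b -> cnt w b P = cnt (upd_weight w a b 0) b P + P a.
Proof.
move=> hs hne hab; rewrite /cnt (cardsD1 a) addnC.
have -> : a \in [set y | P y && (0 < w b y)] = P a by rewrite inE hs hab andbT.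
congr (_ + _); apply: eq_card => y; rewrite !inE /upd_weight eqxx.
rewrite [b == a]eq_sym (negbTE hne) /=.
by case: (y == a); rewrite ?andbF.
Qed.

Lemma cnt_upd_o (T : finType) w (a b x : T) (P : pred T) :
  x != a -> x != b -> cnt (upd_weight w a b 0) x P = cnt w x P.
Proof.
move=> h1 h2; rewrite /cnt; apply: eq_card => y.
by rewrite !inE /upd_weight (negbTE h1) (negbTE h2).
Qed.

Lemma odd_ex (T : finType) w (x : T) P :
  odd (cnt w x P) -> exists y, P y && (0 < w x y).
Proof.
move=> h; have : 0 < cnt w x P by case: (cnt w x P) h.
rewrite /cnt card_gt0 => /set0Pn [y]; rewrite inE => hy; by exists y.
Qed.

Lemma k0 k m : k < m -> m <= 1 -> k = 0.
Proof. by case: k => // k; case: m => // [[]]. Qed.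

Lemma lose_inv (T : finType) (adj : rel T) (s : T -> bool) :
  irreflexive adj -> (forall x y, adj x y -> s y = ~~ s x) ->
  forall m u w, npos w < m -> Wf adj w ->
  (forall x, s x != s u -> ~~ odd (cnt w x predT)) -> nim_lose adj u w.
Proof.
move=> hirr hbip; elim=> [//|m IH] u w hm hwf hpar.
constructor => u' k hadj hpos hk.
have [hs hl ha] := hwf.
have -> := k0 hk (hl u u').
have hne : u != u' by apply/eqP => e; move: hadj; rewrite e hirr.
set w' := upd_weight w u u' 0.
have hwf' : Wf adj w' by apply: Wf_upd.
have su' : s u' != s u by rewrite (hbip _ _ hadj); case: (s u).
have e1 := cnt_upd_b predT hs hne hpos.
have hodd : odd (cnt w' u' predT).
  by move: (hpar _ su'); rewrite e1 /= addn1 /=; case: (odd _).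
have [z /= hz] := odd_ex hodd.
have [hs' hl' ha'] := hwf'.
have hadj' := ha' _ _ hz.
have hne' : u' != z by apply/eqP => e; move: hadj'; rewrite e hirr.
apply: (NimWin hadj' hz hz).
apply: IH.
- apply: leq_trans (npos_upd hz) _; rewrite -ltnS.
  exact: leq_trans (npos_upd hpos) (ltnW hm).
- exact: Wf_upd.
- move=> x hx.
  have sz : s z = s u by rewrite (hbip _ _ hadj') (hbip _ _ hadj) negbK.
  rewrite sz in hx.
  have hxz : x != z by apply: contraNneq hx => ->; rewrite sz.
  have hxu : x != u by apply: contraNneq hx => ->.
  case: (eqVneq x u') => [->|hxu'].
    have e2 := cnt_upd_a predT hne' hz.
    move: (hpar _ su'); rewrite e1 e2 /= !addn1 /=.
    by case: (odd _).
  rewrite cnt_upd_o // /w' cnt_upd_o //.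
  by apply: hpar; rewrite eq_sym in hx; rewrite eq_sym.
Qed.

Lemma win_inv (T : finType) (adj : rel T) (L : pred T) :
  irreflexive adj -> (forall x y, adj x y -> L x -> ~~ L y) ->
  forall m u w, npos w < m -> Wf adj w -> ~~ L u -> odd (cnt w u L) ->
  (forall x, ~~ L x -> x != u -> ~~ odd (cnt w x L)) -> nim_win adj u w.
Proof.
move=> hirr hind; elim=> [//|m IH] u w hm hwf hLu hodd hpar.
have [y /andP [hLy hpos]] := odd_ex hodd.
have [hs hl ha] := hwf.
have hadj := ha _ _ hpos.
apply: (NimWin hadj hpos hpos).
have hne : u != y by apply: contraNneq hLu => ->.
set w' := upd_weight w u y 0.
have hwf' : Wf adj w' by apply: Wf_upd.
have [hs' hl' ha'] := hwf'.
have e1 := cnt_upd_a L hne hpos.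
have evu : ~~ odd (cnt w' u L) by move: hodd; rewrite e1 hLy addn1 /=; case: (odd _).
have ev : forall x, ~~ L x -> ~~ odd (cnt w' x L).
  move=> x hx; case: (eqVneq x u) => [->//|hxu].
  have hxy : x != y by apply: contraNneq hx => ->.
  by rewrite cnt_upd_o //; apply: hpar.
constructor => z k hadj' hpos' hk.
have -> := k0 hk (hl' y z).
have hLz := hind _ _ hadj' hLy.
have hne' : y != z by apply/eqP => e; move: hadj'; rewrite e hirr.
apply: IH.
- apply: leq_trans (npos_upd hpos') _; rewrite -ltnS.
  exact: leq_trans (npos_upd hpos) (ltnW hm).
- exact: Wf_upd.
- exact: hLz.
- have e2 := cnt_upd_b L hs' hne' hpos'.
  by move: (ev _ hLz); rewrite e2 hLy addn1 /=; case: (odd _).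
- move=> x hx hxz.
  have hxy : x != y by apply: contraNneq hx => ->.
  rewrite cnt_upd_o //; exact: ev.
Qed.

Scheme nim_win_mut := Induction for nim_win Sort Prop
  with nim_lose_mut := Induction for nim_lose Sort Prop.

Lemma win_not_lose (T : finType) (adj : rel T) u w :
  nim_win adj u w -> ~ nim_lose adj u w.
Proof.
move=> h.
apply: (@nim_win_mut T adj (fun u w _ => ~ nim_lose adj u w)
                          (fun u w _ => ~ nim_win adj u w)) h.
- move=> v w0 u0 k a p q hl IH hl2.
  inversion hl2 as [v1 w1 H]; subst.
  exact: IH (H _ _ a p q).
- move=> v w0 H IH hw.
  inversion hw as [v1 w1 u1 k1 a p q hl]; subst.
  exact: IH _ _ a p q hl.
Qed.

Definition flip n (x : hypercube_vertex n) (j : 'I_n) : hypercube_vertex n :=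
  [ffun i => if i == j then ~~ x i else x i].

Lemma flip_inj n (x : hypercube_vertex n) : injective (flip x).
Proof.
move=> j1 j2 /ffunP /(_ j1); rewrite !ffunE eqxx.
by case: eqVneq => // _; case: (x j1).
Qed.

Lemma adj_flip n (x : hypercube_vertex n) j : hypercube_adj x (flip x j).
Proof.
rewrite /hypercube_adj; apply/eqP.
have -> : [set i | x i != flip x j i] = [set j].
  apply/setP => i; rewrite !inE ffunE; case: (eqVneq i j) => [->|hij].
    by case: (x j).
  by rewrite eqxx.
by rewrite cards1.
Qed.

Lemma adjE n (x y : hypercube_vertex n) : hypercube_adj x y -> exists j, y = flip x j.
Proof.
rewrite /hypercube_adj => /cards1P [j hj]; exists j.
apply/ffunP => i; rewrite ffunE.
move: hj => /setP /(_ i); rewrite !inE.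
case: (eqVneq i j) => [->|hij] h.
  by move: h; case: (x j); case: (y j).
by move: h; case: (x i); case: (y i).
Qed.

Definition dist n (v x : hypercube_vertex n) := #|[set i | x i != v i]|.

Lemma dist_flip n (v x : hypercube_vertex n) j :
  if x j != v j then dist v x = (dist v (flip x j)).+1
  else dist v (flip x j) = (dist v x).+1.
Proof.
rewrite /dist; case: ifP => hj.
  rewrite (cardsD1 j) inE hj add1n; congr (_.+1); apply: eq_card => i.
  rewrite !inE ffunE; case: (eqVneq i j) => [->|//]. by move: hj; case: (x j); case: (v j).
have -> : [set i | flip x j i != v i] = j |: [set i | x i != v i].
  apply/setP => i; rewrite !inE ffunE; case: (eqVneq i j) => [->|//] /=.
  by move: hj; case: (x j); case: (v j).
by rewrite cardsU1 inE hj.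
Qed.

Lemma odd_dist_flip n (v x : hypercube_vertex n) j :
  odd (dist v (flip x j)) = ~~ odd (dist v x).
Proof.
have := dist_flip v x j; case: ifP => _ ->; by rewrite /= ?negbK.
Qed.

Lemma hc_irr n : irreflexive (@hypercube_adj n).
Proof.
move=> x; rewrite /hypercube_adj.
have -> : [set i | x i != x i] = set0 by apply/setP => i; rewrite !inE eqxx.
by rewrite cards0.
Qed.

Lemma hc_sym n (x y : hypercube_vertex n) : hypercube_adj x y = hypercube_adj y x.
Proof.
rewrite /hypercube_adj.
have -> : [set i | x i != y i] = [set i | y i != x i] by apply/setP => i; rewrite !inE eq_sym.
by [].
Qed.

Lemma hc_bip n (v x y : hypercube_vertex n) :
  hypercube_adj x y -> odd (dist v y) = ~~ odd (dist v x).
Proof. by move/adjE => [j ->]; exact: odd_dist_flip. Qed.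

Lemma Wf_unit n : Wf (@hypercube_adj n) (unit_weights (@hypercube_adj n)).
Proof.
split.
- by move=> x y; rewrite /unit_weights hc_sym.
- by move=> x y; rewrite /unit_weights; case: ifP.
- by move=> x y; rewrite /unit_weights; case: ifP.
Qed.

Lemma cnt_unit n (x : hypercube_vertex n) P :
  cnt (unit_weights (@hypercube_adj n)) x P = #|[set j | P (flip x j)]|.
Proof.
rewrite /cnt -(card_imset _ (@flip_inj n x)); apply: eq_card => y.
rewrite [in LHS]inE /unit_weights.
case: ifP => h /=.
  have [j ->] := adjE h; rewrite mem_imset; last exact: flip_inj.
  by rewrite inE andbT.
rewrite andbF; apply/esym/imsetP => [[j _ e]].
by move: h; rewrite e adj_flip.
Qed.

Lemma dist0 n (v x : hypercube_vertex n) : dist v x = 0 -> x = v.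
Proof.
rewrite /dist => /cards0_eq /setP h; apply/ffunP => i.
by move: (h i); rewrite !inE => /negbFE/eqP.
Qed.

Theorem mainTheorem5 (n : nat) (v : hypercube_vertex n) :
  1 <= n ->
  (nim_lose (@hypercube_adj n) v (unit_weights (@hypercube_adj n)) <-> ~~ odd n).
Proof.
move=> hn; split.
- move=> hl; apply/negP => ho; apply: (win_not_lose _ hl).
  apply: (@win_inv _ _ (fun y => dist v y == 1) (@hc_irr n) _
            (npos (unit_weights (@hypercube_adj n))).+1) => //.
  + move=> x y hxy /eqP hx; apply/negP => /eqP hy.
    by move: (hc_bip v hxy); rewrite hx hy.
  + exact: Wf_unit.
  + have -> : dist v v = 0.
      apply/eqP; rewrite cards_eq0; apply/eqP/setP => i; by rewrite !inE eqxx.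
    by [].
  + rewrite cnt_unit.
    have -> : [set j | dist v (flip v j) == 1] = setT.
      apply/setP => j; rewrite !inE.
      have := dist_flip v v j; rewrite eqxx /= => ->.
      have -> : dist v v = 0.
        apply/eqP; rewrite cards_eq0; apply/eqP/setP => i; by rewrite !inE eqxx.
      by [].
    by rewrite cardsT card_ord.
  + move=> x hx hxv; rewrite cnt_unit.
    have hd0 : dist v x != 0 by apply: contraNneq hxv => /dist0 ->.
    have -> : [set j | dist v (flip x j) == 1] =
              [set j | (x j != v j) && (dist v x == 2)].
      apply/setP => j; rewrite !inE.
      have := dist_flip v x j; case: ifP => hj -> //.
      by rewrite eqSS (negbTE hd0).
    case: eqP => h2.
      have -> : [set j | (x j != v j) && true] = [set i | x i != v i].
        by apply/setP => j; rewrite !inE andbT.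
      by move: h2; rewrite /dist => ->.
    have -> : [set j | (x j != v j) && false] = set0.
      by apply/setP => j; rewrite !inE andbF.
    by rewrite cards0.
- move=> he.
  apply: (@lose_inv _ _ (fun x => odd (dist v x)) (@hc_irr n) _
            (npos (unit_weights (@hypercube_adj n))).+1) => //.
  + by move=> x y hxy; apply: hc_bip.
  + exact: Wf_unit.
  + move=> x _; rewrite cnt_unit.
    have -> : [set j | predT (flip x j)] = setT by apply/setP => j; rewrite !inE.
    by rewrite cardsT card_ord.
Qed.
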